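(* If $P$ is a D-product of length $\ell$ over a finite alphabet $A$, then $h({\downarrow}P)\leq\ell+1$ and $h({\downarrow}_<P)\leq\ell+1$.
   Context: A D-product is a regular expression $E_1E_2\cdots E_\ell$ where each $E_i$ is either $B^*$ for some subalphabet $B\subseteq A$ or a single letter $a\in A$; $\ell$ is its length, and $P$ also denotes the language of the expression. $u\sqsubseteq v$ (subword) means $u=a_1\cdots a_n$ with letters $a_i$ and $v=v_0a_1v_1\cdots a_nv_n$; $u\sqsubset v$ means $u\sqsubseteq v$, $u\ne v$. ${\downarrow}L=\{v~|~\exists u\in L: v\sqsubseteq u\}$, ${\downarrow}_<L=\{v~|~\exists u\in L: v\sqsubset u\}$. $u\sim_n v$ iff $u,v$ have the same subwords of length at most $n$; $L$ is $n$-PT if it is a union of $\sim_n$-classes, and $h(L)$ is the least such $n$. *)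

(* Defs.v *)
From mathcomp Require Import all_boot.
Set Implicit Arguments. Unset Strict Implicit. Unset Printing Implicit Defensive.

(* A factor of a D-product: either B^* for a subalphabet B, or a letter a. *)
Inductive ditem (A : finType) : Type :=
  | DStar of {set A}
  | DLetter of A.
Arguments DStar {A}. Arguments DLetter {A}.

Definition item_lang (A : finType) (e : ditem A) : seq A -> Prop :=
  match e with
  | DStar B => fun u => all (fun x => x \in B) u
  | DLetter a => fun u => u = [:: a]
  end.

Definition dproduct (A : finType) := seq (ditem A).

Fixpoint dlang (A : finType) (P : dproduct A) : seq A -> Prop :=
  match P with
  | [::] => fun w => w = [::]
  | e :: P' => fun w => exists u v, w = u ++ v /\ item_lang e u /\ dlang P' v
  end.

Definition subword (A : eqType) (u v : seq A) : bool := subseq u v.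
Definition ssubword (A : eqType) (u v : seq A) : bool := subseq u v && (u != v).

Definition downclosure (A : eqType) (L : seq A -> Prop) : seq A -> Prop :=
  fun v => exists u, L u /\ subword v u.
Definition sdownclosure (A : eqType) (L : seq A -> Prop) : seq A -> Prop :=
  fun v => exists u, L u /\ ssubword v u.

Definition simn (A : eqType) (n : nat) (u v : seq A) : Prop :=
  forall w : seq A, size w <= n -> subword w u = subword w v.

Definition nPT (A : eqType) (n : nat) (L : seq A -> Prop) : Prop :=
  forall u v, simn n u v -> (L u <-> L v).

(* h(L) <= m : the least n with L n-PT exists and is at most m. *)
Definition h_le (A : eqType) (L : seq A -> Prop) (m : nat) : Prop :=
  exists n, n <= m /\ nPT n L.

(* Main.v *)
From Stdlib Require Import Classical.
Require Import Defs.
From mathcomp Require Import all_boot.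

Section S.
Variable A : finType.
Implicit Types (P : dproduct A) (v w u : seq A).

Definition D P := downclosure (dlang P).

Lemma dlang_ex P : exists u, dlang P u.
Proof.
elim: P => [|e P [u Hu]]; first by exists [::].
case: e => [B|a].
- by exists ([::] ++ u); exists [::], u.
- by exists ([:: a] ++ u); exists [:: a], u.
Qed.

Lemma D_nil P : D P [::].
Proof. by have [u Hu] := dlang_ex P; exists u; split => //; apply: sub0seq. Qed.

Lemma D_down P w v : subseq w v -> D P v -> D P w.
Proof.
move=> Hwv [u [Hu Hvu]]; exists u; split => //.
exact: (subseq_trans Hwv).
Qed.

Lemma head_trick P c s w : subseq w (c :: s) -> ~ D P w ->
  exists z, subseq (c :: z) (c :: s) /\ size (c :: z) <= (size w).+1 /\ ~ D P (c :: z).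
Proof.
case: w => [|d w'] Hs HD; first by case: HD; apply: D_nil.
move: Hs => /=; case: ifP => [/eqP E Hs|/eqP Hne Hs]; first subst d.
- by exists w'; rewrite /= eqxx.
- exists (d :: w'); split; first by rewrite /= eqxx.
  split => //. move=> H; apply: HD; apply: D_down H; exact: subseq_cons.
Qed.


Lemma star_skip (B : {set A}) c z x y : all (fun b => b \in B) x -> c \notin B ->
  subseq (c :: z) (x ++ y) -> subseq (c :: z) y.
Proof.
elim: x => [//|b x IH] /= /andP [Hb Hx] Hc.
case: eqP => [E|_]; first by rewrite E Hb in Hc.
exact: IH.
Qed.

Lemma obst P v : ~ D P v -> exists w, subseq w v /\ size w <= (size P).+1 /\ ~ D P w.
Proof.
elim: P v => [|e P IH] v.
- case: v => [|c v'] H; first by case: H; apply: D_nil.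
  exists [:: c]; split; first by rewrite /= eqxx sub0seq.
  split => //. by move=> [u [/= -> ]].
- case: e => [B|a].
  + elim: v => [|c v IHv] H; first by case: H; apply: D_nil.
    case: (boolP (c \in B)) => Hc.
    * have H' : ~ D (DStar B :: P) v.
        move=> [u [[x [y [-> [Hx Hy]]]] Hs]]; apply: H.
        exists ((c :: x) ++ y); split; first by exists (c :: x), y; rewrite /= Hc Hx.
        by rewrite /subword /= eqxx.
      have [w [Hw1 [Hw2 Hw3]]] := IHv H'.
      exists w; split => //; exact: (subseq_trans Hw1 (subseq_cons _ _)).
    * have H' : ~ D P (c :: v).
        move=> [u [Hu Hs]]; apply: H; exists u; split => //.
        by exists [::], u.
      have [w [Hw1 [Hw2 Hw3]]] := IH _ H'.
      have [z [Hz1 [Hz2 Hz3]]] := head_trick _ _ _ _ Hw1 Hw3.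
      exists (c :: z); split => //; split; first by apply: (leq_trans Hz2).
      move=> [u [[x [y [-> [Hx Hy]]]] Hs]]; apply: Hz3.
      exists y; split; first exact: Hy. apply: (star_skip B c z x y); [exact: Hx|exact: Hc|exact: Hs].
  + case: v => [|c v] H; first by case: H; apply: D_nil.
    case: (eqVneq c a) => [Eca|Nca].
    * subst c.
      have H' : ~ D P v.
        move=> [u [Hu Hs]]; apply: H; exists ([:: a] ++ u); split; first by exists [:: a], u.
        by rewrite /subword /= eqxx.
      have [w [Hw1 [Hw2 Hw3]]] := IH _ H'.
      exists (a :: w); split; first by rewrite /= eqxx.
      split => //.
      move=> [u [[x [y [-> [/= -> Hy]]]] Hs]]; apply: Hw3.
      by exists y; split; first exact: Hy; move: Hs; rewrite /subword /= eqxx.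
    * have H' : ~ D P (c :: v).
        move=> [u [Hu Hs]]; apply: H; exists ([:: a] ++ u); split; first by exists [:: a], u.
        by apply: (subseq_trans Hs); apply: subseq_cons.
      have [w [Hw1 [Hw2 Hw3]]] := IH _ H'.
      have [z [Hz1 [Hz2 Hz3]]] := head_trick _ _ _ _ Hw1 Hw3.
      exists (c :: z); split => //; split; first by apply: (leq_trans Hz2).
      move=> [u [[x [y [-> [/= -> Hy]]]] Hs]]; apply: Hz3.
      exists y; split; first exact: Hy; move: Hs; rewrite /subword /=.
      by case: eqP => // E; rewrite E eqxx in Nca.
Qed.

Lemma maxsize P v : dlang P v -> (forall u, dlang P u -> subseq v u -> u = v) ->
  size v <= size P.
Proof.
elim: P v => [|e P IH] v; first by move=> /= ->.
move=> [x [y [-> [Hx Hy]]]] Hmax.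
have Hy' : size y <= size P.
  apply: IH => // u Hu Hs.
  have := Hmax (x ++ u); rewrite -/(dlang (e :: P)).
  move=> /(_ _) E.
  have : x ++ u = x ++ y.
    apply: E; first by exists x, u.
    by rewrite cat_subseq ?subseq_refl.
  by move/eqP; rewrite eqseq_cat // eqxx => /eqP.
case: e Hx Hmax => [B|a] Hx Hmax; last first.
  by move: Hx => /= ->; rewrite /= ltnS.
case: x Hx Hmax => [|b x] Hx Hmax; first by rewrite /=; apply: leqW.
exfalso.
have E := Hmax (b :: (b :: x) ++ y).
have : b :: (b :: x) ++ y = (b :: x) ++ y.
  apply: E; last by apply: subseq_cons.
  exists (b :: b :: x), y; split => //; split => //.
  by move: Hx => /= /andP [-> ->].
by move/(congr1 size) => /= [] /esym /n_Sn.
Qed.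

Definition SD P := sdownclosure (dlang P).

Lemma SD_down P w v : subseq w v -> SD P v -> SD P w.
Proof.
move=> Hwv [u [Hu /andP [Hvu Hne]]]; exists u; split => //.
apply/andP; split; first exact: (subseq_trans Hwv).
apply/eqP => E; subst w; move/negP: Hne; apply.
have H1 := size_subseq Hwv; have H2 := size_subseq Hvu.
have := size_subseq_leqif Hvu => [[_ <-]].
by rewrite eqn_leq H1 H2.
Qed.

Lemma sobst P v : ~ SD P v -> exists w, subseq w v /\ size w <= (size P).+1 /\ ~ SD P w.
Proof.
move=> H.
case: (classic (D P v)) => HD; last first.
  have [w [H1 [H2 H3]]] := obst _ _ HD.
  exists w; split => //; split => //.
  move=> [u [Hu /andP [Hs _]]]; apply: H3; by exists u.
have Hmax : forall u, dlang P u -> subseq v u -> u = v.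
  move=> u Hu Hs; apply: NNPP => Hne; apply: H; exists u; split => //.
  by apply/andP; split => //; apply/eqP => E; apply: Hne.
have [u [Hu Hs]] := HD.
have Hv : dlang P v by rewrite -(Hmax u Hu Hs).
exists v; split; first exact: subseq_refl.
split => //; apply: leqW; exact: maxsize.
Qed.

Lemma obst_nPT (L : seq A -> Prop) n :
  (forall w v, subseq w v -> L v -> L w) ->
  (forall v, ~ L v -> exists w, subseq w v /\ size w <= n /\ ~ L w) ->
  nPT n L.
Proof.
move=> Hd Ho.
have K : forall u v, simn n u v -> L u -> L v.
  move=> u v Hs Lu; apply: NNPP => Nv.
  have [w [H1 [H2 H3]]] := Ho v Nv.
  apply: H3; apply: (Hd w u) => //.
  have := Hs w H2; rewrite /subword => ->; exact: H1.
move=> u v Hs; split; first exact: K.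
apply: K => w Hw; symmetry; exact: Hs.
Qed.

End S.

Theorem proposition12 (A : finType) (P : dproduct A) :
  h_le (downclosure (dlang P)) (size P).+1 /\
  h_le (sdownclosure (dlang P)) (size P).+1.
Proof.
split; exists (size P).+1; split => //.
- apply: obst_nPT; [exact: D_down | exact: obst].
- apply: obst_nPT; [exact: SD_down | exact: sobst].
Qed.
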